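(* Let $A=\mathbb C\langle u^{\pm1},v^{\pm1}\rangle$ and $c=uvu^{-1}v^{-1}$. For every $H\in A$, $\{c,H\}_K\equiv0\bmod[A,A]$; that is, $\pi(c)$ lies in the center of the bracket induced by $\{\cdot,\cdot\}_K$ on $A/[A,A]$.
   Context: $A$ is the group algebra over $\mathbb C$ of the free group on $u,v$; $[A,A]$ is the span of all $ab-ba$; $\pi:A\to A/[A,A]$ the projection. $\mu(a\otimes b)=ab$; $A\otimes A$ has componentwise multiplication. The double bracket $\llbracket\cdot\rrbracket_K:A\otimes A\to A\otimes A$ is the linear map with $\llbracket u\otimes v\rrbracket_K=-vu\otimes1$, $\llbracket v\otimes u\rrbracket_K=uv\otimes1$, $\llbracket u\otimes u\rrbracket_K=\llbracket v\otimes v\rrbracket_K=0$, extended (also to inverse letters) by the Leibniz rules $\llbracket a\otimes bc\rrbracket_K=\llbracket a\otimes b\rrbracket_K(1\otimes c)+(b\otimes1)\llbracket a\otimes c\rrbracket_K$ and $\llbracket ab\otimes c\rrbracket_K=\llbracket a\otimes c\rrbracket_K(b\otimes1)+(1\otimes a)\llbracket b\otimes c\rrbracket_K$. The bracket is $\{a,b\}_K=\mu(\llbracket a\otimes b\rrbracket_K)$. *)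

(* Defs.v *)
From HB Require Import structures.
From mathcomp Require Import all_boot all_algebra.
From mathcomp Require Import finmap.
From mathcomp Require Import monalg.
From mathcomp Require Import complex.
From mathcomp Require Import Rstruct.

Set Implicit Arguments.
Unset Strict Implicit.
Unset Printing Implicit Defensive.

Import GRing.Theory.
Local Open Scope ring_scope.

Definition Cc : fieldType := (Rdefinitions.R)[i].

(* The free group F(u,v) on two generators, as reduced words.
   A letter is a pair (g, e): g = false means u, g = true means v;
   e = false is the letter itself, e = true its inverse. *)
Definition letter := (bool * bool)%type.
Definition linv (x : letter) : letter := (x.1, ~~ x.2).

Definition lpush (x : letter) (s : seq letter) : seq letter :=
  if s is y :: s' then (if y == linv x then s' else x :: s) else [:: x].

Definition reduce (w : seq letter) : seq letter := foldr lpush [::] w.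

Definition reducedw (w : seq letter) : bool :=
  sorted (fun x y => y != linv x) w.

Lemma reduce_reduced w : reducedw (reduce w).
Proof.
rewrite /reducedw; elim: w => [|x w IH] //=.
rewrite /lpush; case: (reduce w) IH => [|y s] //= Hs.
case: ifP => [_|/negbT Hy]; first exact: path_sorted Hs.
by rewrite /= Hy Hs.
Qed.

Record FG := FGword { fgval : seq letter; _ : reducedw fgval }.
HB.instance Definition _ := [isSub for fgval].
HB.instance Definition _ := [Equality of FG by <:].
HB.instance Definition _ := [Choice of FG by <:].

Definition fgmul (g h : FG) : FG :=
  @FGword (reduce (fgval g ++ fgval h)) (reduce_reduced _).
Definition fg1 : FG := @FGword [::] isT.
Definition fg_letter (x : letter) : FG := @FGword [:: x] isT.
Definition fg_u  : FG := fg_letter (false, false).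
Definition fg_v  : FG := fg_letter (true, false).
Definition fg_ui : FG := fg_letter (false, true).
Definition fg_vi : FG := fg_letter (true, true).

Definition gconv (K : choiceType) (op : K -> K -> K)
    (a b : {malg Cc[K]}) : {malg Cc[K]} :=
  \sum_(g <- msupp a) \sum_(h <- msupp b) << a@_g * b@_h *g op g h >>.

(* A = C<u^{+-1}, v^{+-1}> = C[F(u,v)] *)
Definition A := {malg Cc[FG]}.
Definition Amul (a b : A) : A := gconv fgmul a b.
Definition A1 : A := << fg1 >>.
Definition Au  : A := << fg_u >>.
Definition Av  : A := << fg_v >>.
Definition Aui : A := << fg_ui >>.
Definition Avi : A := << fg_vi >>.

(* A (x) A = C[F(u,v) x F(u,v)], with componentwise multiplication *)
Definition fgmul2 (p q : FG * FG) : FG * FG := (fgmul p.1 q.1, fgmul p.2 q.2).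
Definition AA := {malg Cc[(FG * FG)%type]}.
Definition AAmul (x y : AA) : AA := gconv fgmul2 x y.

Definition tens (a b : A) : AA :=
  \sum_(g <- msupp a) \sum_(h <- msupp b) << a@_g * b@_h *g (g, h) >>.

Definition mu (x : AA) : A :=
  \sum_(p <- msupp x) << x@_p *g fgmul p.1 p.2 >>.

Definition in_commA (x : A) : Prop :=
  exists s : seq (Cc * (A * A)),
    x = \sum_(t <- s) t.1 *: (Amul t.2.1 t.2.2 - Amul t.2.2 t.2.1).

Definition is_double_bracket_K (D : {linear AA -> AA}) : Prop :=
  [/\ D (tens Au Av) = - tens (Amul Av Au) A1,
      D (tens Av Au) = tens (Amul Au Av) A1,
      D (tens Au Au) = 0 /\ D (tens Av Av) = 0,
      (forall a b c : A,
          D (tens a (Amul b c)) =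
          AAmul (D (tens a b)) (tens A1 c) + AAmul (tens b A1) (D (tens a c)))
    & (forall a b c : A,
          D (tens (Amul a b) c) =
          AAmul (D (tens a c)) (tens b A1) + AAmul (tens A1 a) (D (tens b c)))].

Definition bracketK (D : {linear AA -> AA}) (a b : A) : A := mu (D (tens a b)).

Definition cA : A := Amul (Amul (Amul Au Av) Aui) Avi.

(* Main.v *)
Require Import Defs.
From HB Require Import structures.
From mathcomp Require Import all_boot all_algebra.
From mathcomp Require Import finmap monalg complex Rstruct.

Set Implicit Arguments.
Unset Strict Implicit.
Unset Printing Implicit Defensive.
Import GRing.Theory.
Local Open Scope ring_scope.


Lemma ZU (K : choiceType) (c x : Cc) (k : K) : c *: << x *g k >> = << c * x *g k >>.
Proof. by apply/malgP=> k'; rewrite mcoeffZ !mcoeffU mulrnAr. Qed.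

Definition bconv {K1 K2 K3 : choiceType} (op : K1 -> K2 -> K3) (a : {malg Cc[K1]}) (b : {malg Cc[K2]}) : {malg Cc[K3]} :=
  \sum_(g <- msupp a) \sum_(h <- msupp b) << a@_g * b@_h *g op g h >>.

Lemma bconvw {K1 K2 K3 : choiceType} (op : K1 -> K2 -> K3) (d1 : {fset K1}) (d2 : {fset K2}) a b :
  (msupp a `<=` d1)%fset -> (msupp b `<=` d2)%fset ->
  bconv op a b = \sum_(g <- d1) \sum_(h <- d2) << a@_g * b@_h *g op g h >>.
Proof.
move=> le_d1 le_d2; rewrite /bconv (big_fset_incl _ le_d1) /=.
  apply/eq_bigr=> k1 _; apply/big_fset_incl => // k _ /mcoeff_outdom ->.
  by rewrite mulr0 monalgU0.
move=> k _ /mcoeff_outdom g1k.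
by rewrite big1 => // k' _; rewrite g1k mul0r monalgU0.
Qed.

Lemma bconvZDl {K1 K2 K3 : choiceType} (op : K1 -> K2 -> K3) c a a' b :
  bconv op (c *: a + a') b = c *: bconv op a b + bconv op a' b.
Proof.
pose d := (msupp a `|` msupp a')%fset.
have h1 : (msupp (c *: a + a') `<=` d)%fset.
  apply: fsubset_trans (msuppD_le _ _) _; apply: fsetSU; exact: msuppZ_le.
rewrite (bconvw op h1 (fsubset_refl _)) (bconvw op (fsubsetUl (msupp a) (msupp a')) (fsubset_refl (msupp b))).
rewrite (bconvw op (fsubsetUr (msupp a) (msupp a')) (fsubset_refl (msupp b))).
rewrite scaler_sumr -big_split; apply eq_bigr => g _.
rewrite scaler_sumr -big_split; apply eq_bigr => h _.
by rewrite mcoeffD mcoeffZ mulrDl monalgUD ZU mulrA.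
Qed.

Lemma bconvZDr {K1 K2 K3 : choiceType} (op : K1 -> K2 -> K3) c a b b' :
  bconv op a (c *: b + b') = c *: bconv op a b + bconv op a b'.
Proof.
pose d := (msupp b `|` msupp b')%fset.
have h1 : (msupp (c *: b + b') `<=` d)%fset.
  apply: fsubset_trans (msuppD_le _ _) _; apply: fsetSU; exact: msuppZ_le.
rewrite (bconvw op (fsubset_refl _) h1) (bconvw op (fsubset_refl (msupp a)) (fsubsetUl (msupp b) (msupp b'))).
rewrite (bconvw op (fsubset_refl (msupp a)) (fsubsetUr (msupp b) (msupp b'))).
rewrite scaler_sumr -big_split; apply eq_bigr => g _.
rewrite scaler_sumr -big_split; apply eq_bigr => h _.
by rewrite mcoeffD mcoeffZ mulrDr monalgUD ZU mulrCA.
Qed.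

Lemma bconvUU {K1 K2 K3 : choiceType} (op : K1 -> K2 -> K3) c1 c2 k1 k2 :
  bconv op << c1 *g k1 >> << c2 *g k2 >> = << c1 * c2 *g op k1 k2 >>.
Proof. by rewrite (bconvw op msuppU_le msuppU_le) !big_seq_fset1 !mcoeffUU. Qed.

Definition push {K K' : choiceType} (f : K -> K') (x : {malg Cc[K]}) : {malg Cc[K']} :=
  \sum_(p <- msupp x) << x@_p *g f p >>.

Lemma pushw {K K' : choiceType} (f : K -> K') (d : {fset K}) x : (msupp x `<=` d)%fset ->
  push f x = \sum_(p <- d) << x@_p *g f p >>.
Proof.
move=> le; rewrite /push (big_fset_incl _ le) //.
by move=> k _ /mcoeff_outdom ->; rewrite monalgU0.
Qed.

Lemma pushZD {K K' : choiceType} (f : K -> K') c x y : push f (c *: x + y) = c *: push f x + push f y.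
Proof.
pose d := (msupp x `|` msupp y)%fset.
have h1 : (msupp (c *: x + y) `<=` d)%fset.
  apply: fsubset_trans (msuppD_le _ _) _; apply: fsetSU; exact: msuppZ_le.
rewrite (pushw f h1) (pushw f (fsubsetUl (msupp x) (msupp y))) (pushw f (fsubsetUr (msupp x) (msupp y))).
rewrite scaler_sumr -big_split; apply eq_bigr => g _.
by rewrite mcoeffD mcoeffZ monalgUD ZU.
Qed.

Lemma pushU {K K' : choiceType} (f : K -> K') c k : push f << c *g k >> = << c *g f k >>.
Proof. by rewrite (pushw f msuppU_le) big_seq_fset1 mcoeffUU. Qed.

Definition lin (K : choiceType) (V : lmodType Cc) (f : {malg Cc[K]} -> V) :=
  forall c x y, f (c *: x + y) = c *: f x + f y.

Lemma lin0 (K : choiceType) (V : lmodType Cc) (f : {malg Cc[K]} -> V) :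
  lin f -> f 0 = 0.
Proof.
move=> hf; have h := hf 1 0 0; rewrite !scale1r addr0 in h.
by apply: (addrI (f 0)); rewrite addr0 -h.
Qed.

Lemma linD (K : choiceType) (V : lmodType Cc) (f : {malg Cc[K]} -> V) :
  lin f -> forall x y, f (x + y) = f x + f y.
Proof. by move=> hf x y; have := hf 1 x y; rewrite !scale1r. Qed.

Lemma linN (K : choiceType) (V : lmodType Cc) (f : {malg Cc[K]} -> V) :
  lin f -> forall x, f (- x) = - f x.
Proof.
by move=> hf x; have := hf (-1) x 0; rewrite !scaleN1r !addr0 (lin0 hf) addr0.
Qed.

Lemma malg_ext (K : choiceType) (V : lmodType Cc) (f g : {malg Cc[K]} -> V) :
  lin f -> lin g -> (forall k, f << k >> = g << k >>) -> forall x, f x = g x.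
Proof.
move=> hf hg hk x; rewrite (monalgE x).
elim: (enum_fset (msupp x)) => [|k s IH]; first by rewrite !big_nil (lin0 hf) (lin0 hg).
by rewrite big_cons -[x@_k]mulr1 -ZU hf hg hk IH.

Qed.

Lemma linvK x : linv (linv x) = x.
Proof. by case: x => a b; rewrite /linv /= negbK. Qed.

Lemma lpush_cat x r t : reduce (lpush x r ++ t) = lpush x (reduce (r ++ t)).
Proof.
case: r => [|y r] //=.
case: ifP => [/eqP ->|_] //=.
have : reducedw (reduce (r ++ t)) by exact: reduce_reduced.
case: (reduce (r ++ t)) => [|z w] /=; first by rewrite eqxx.
rewrite linvK; case: eqP => [-> Hw|_ _]; last by rewrite /= eqxx.
case: w Hw => [|z' w'] //= /andP [H _].
by rewrite (negbTE H).
Qed.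

Lemma reduce_catl s t : reduce (reduce s ++ t) = reduce (s ++ t).
Proof. by elim: s => [|x s IH] //=; rewrite lpush_cat IH. Qed.

Lemma reduce_id w : reducedw w -> reduce w = w.
Proof.
elim: w => [|x w IH] //= Hw.
rewrite IH; last exact: path_sorted Hw.
by case: w Hw {IH} => [|y w] //= /andP [H _]; rewrite (negbTE H).
Qed.

Lemma reduce_cat s t : reduce (s ++ t) = foldr lpush (reduce t) s.
Proof. by rewrite /reduce foldr_cat. Qed.

Lemma reduce_catr s t : reduce (s ++ reduce t) = reduce (s ++ t).
Proof. by rewrite !reduce_cat reduce_id // reduce_reduced. Qed.

Lemma fgmA : associative Defs.fgmul.
Proof.
move=> g h k; apply: val_inj => /=.
by rewrite reduce_catl reduce_catr catA.
Qed.

Lemma fgm1g g : Defs.fgmul fg1 g = g.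
Proof. by apply: val_inj => /=; rewrite reduce_id //; case: g. Qed.

Lemma fgmg1 g : Defs.fgmul g fg1 = g.
Proof. by apply: val_inj => /=; rewrite cats0 reduce_id //; case: g. Qed.

Local Notation fgm := Defs.fgmul.

Lemma AmulE g h : Amul << g >> << h >> = << fgm g h >>.
Proof. by have := @bconvUU FG FG FG fgm 1 1 g h; rewrite mulr1. Qed.
Lemma AAmulE p q : AAmul << p >> << q >> = << fgmul2 p q >>.
Proof. by have := @bconvUU _ _ _ fgmul2 1 1 p q; rewrite mulr1. Qed.
Lemma tensE g h : tens << g >> << h >> = << (g, h) >>.
Proof. by have := @bconvUU FG FG _ pair 1 1 g h; rewrite mulr1. Qed.
Lemma muE p : mu << p >> = << fgm p.1 p.2 >>.
Proof. exact: (@pushU _ _ (fun p : FG * FG => fgm p.1 p.2) 1 p). Qed.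

Lemma AmulZDl c a a' b : Amul (c *: a + a') b = c *: Amul a b + Amul a' b.
Proof. exact: bconvZDl. Qed.
Lemma AmulZDr c a b b' : Amul a (c *: b + b') = c *: Amul a b + Amul a b'.
Proof. exact: bconvZDr. Qed.
Lemma AAmulZDl c a a' b : AAmul (c *: a + a') b = c *: AAmul a b + AAmul a' b.
Proof. exact: bconvZDl. Qed.
Lemma AAmulZDr c a b b' : AAmul a (c *: b + b') = c *: AAmul a b + AAmul a b'.
Proof. exact: bconvZDr. Qed.
Lemma tensZDl c a a' b : tens (c *: a + a') b = c *: tens a b + tens a' b.
Proof. exact: bconvZDl. Qed.
Lemma tensZDr c a b b' : tens a (c *: b + b') = c *: tens a b + tens a b'.
Proof. exact: bconvZDr. Qed.
Lemma muZD c x y : mu (c *: x + y) = c *: mu x + mu y.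
Proof. exact: pushZD. Qed.

Lemma AmulA a b c : Amul (Amul a b) c = Amul a (Amul b c).
Proof.
move: a; apply: malg_ext => [k x y|k x y|g] /=.
- by rewrite ?AmulZDl ?AmulZDr ?AmulZDl ?AmulZDr.
- by rewrite ?AmulZDl ?AmulZDr ?AmulZDl ?AmulZDr.
move: b; apply: malg_ext => [k x y|k x y|h] /=.
- by rewrite ?AmulZDl ?AmulZDr ?AmulZDl ?AmulZDr.
- by rewrite ?AmulZDl ?AmulZDr ?AmulZDl ?AmulZDr.
move: c; apply: malg_ext => [k x y|k x y|i] /=.
- by rewrite ?AmulZDl ?AmulZDr ?AmulZDl ?AmulZDr.
- by rewrite ?AmulZDl ?AmulZDr ?AmulZDl ?AmulZDr.
by rewrite !AmulE fgmA.
Qed.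

Lemma fgmul2A : associative fgmul2.
Proof. by move=> [a b] [c d] [e f]; rewrite /fgmul2 /= !fgmA. Qed.

Lemma bconvA (K : choiceType) (op : K -> K -> K) : associative op ->
  forall a b c, bconv op (bconv op a b) c = bconv op a (bconv op b c).
Proof.
move=> opA a b c.
move: a; apply: malg_ext => [k x y|k x y|g] /=.
- by rewrite !bconvZDl.
- by rewrite !bconvZDl.
move: b; apply: malg_ext => [k x y|k x y|h] /=.
- by rewrite bconvZDr bconvZDl.
- by rewrite bconvZDl bconvZDr.
move: c; apply: malg_ext => [k x y|k x y|i] /=.
- by rewrite !bconvZDr.
- by rewrite !bconvZDr.
by rewrite !bconvUU opA !mulr1.
Qed.

Lemma AAmulA a b c : AAmul (AAmul a b) c = AAmul a (AAmul b c).
Proof. exact: (bconvA fgmul2A). Qed.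

Lemma AAmulDl a a' b : AAmul (a + a') b = AAmul a b + AAmul a' b.
Proof. by apply: (linD (f := fun a => AAmul a b)) => c x y; rewrite AAmulZDl. Qed.
Lemma AAmulDr a b b' : AAmul a (b + b') = AAmul a b + AAmul a b'.
Proof. by apply: (linD (f := fun b => AAmul a b)) => c x y; rewrite AAmulZDr. Qed.
Lemma AAmulNl a b : AAmul (- a) b = - AAmul a b.
Proof. by apply: (linN (f := fun a => AAmul a b)) => c x y; rewrite AAmulZDl. Qed.
Lemma AAmulNr a b : AAmul a (- b) = - AAmul a b.
Proof. by apply: (linN (f := fun b => AAmul a b)) => c x y; rewrite AAmulZDr. Qed.
Lemma AAmul0l b : AAmul 0 b = 0.
Proof. by apply: (lin0 (f := fun a => AAmul a b)) => c x y; rewrite AAmulZDl. Qed.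
Lemma AAmul0r a : AAmul a 0 = 0.
Proof. by apply: (lin0 (f := fun b => AAmul a b)) => c x y; rewrite AAmulZDr. Qed.
Lemma AmulDl a a' b : Amul (a + a') b = Amul a b + Amul a' b.
Proof. by apply: (linD (f := fun a => Amul a b)) => c x y; rewrite AmulZDl. Qed.
Lemma AmulDr a b b' : Amul a (b + b') = Amul a b + Amul a b'.
Proof. by apply: (linD (f := fun b => Amul a b)) => c x y; rewrite AmulZDr. Qed.
Lemma AmulNl a b : Amul (- a) b = - Amul a b.
Proof. by apply: (linN (f := fun a => Amul a b)) => c x y; rewrite AmulZDl. Qed.
Lemma AmulNr a b : Amul a (- b) = - Amul a b.
Proof. by apply: (linN (f := fun b => Amul a b)) => c x y; rewrite AmulZDr. Qed.
Lemma Amul0l b : Amul 0 b = 0.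
Proof. by apply: (lin0 (f := fun a => Amul a b)) => c x y; rewrite AmulZDl. Qed.
Lemma Amul0r a : Amul a 0 = 0.
Proof. by apply: (lin0 (f := fun b => Amul a b)) => c x y; rewrite AmulZDr. Qed.
Lemma muD x y : mu (x + y) = mu x + mu y.
Proof. exact: (linD muZD). Qed.
Lemma muN x : mu (- x) = - mu x.
Proof. exact: (linN muZD). Qed.
Lemma mu0 : mu 0 = 0.
Proof. exact: (lin0 muZD). Qed.

Lemma AAunitl X : AAmul (tens A1 A1) X = X.
Proof.
rewrite tensE; move: X; apply: malg_ext => [k x y|k x y|[g h]] /=.
- by rewrite AAmulZDr.
- by [].
by rewrite AAmulE /fgmul2 /= !fgm1g.
Qed.

Lemma AAunitr X : AAmul X (tens A1 A1) = X.
Proof.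
rewrite tensE; move: X; apply: malg_ext => [k x y|k x y|[g h]] /=.
- by rewrite AAmulZDl.
- by [].
by rewrite AAmulE /fgmul2 /= !fgmg1.
Qed.

Ltac fgeq := apply: val_inj; simpl; reflexivity.

Lemma A1A1 : Amul A1 A1 = A1.
Proof. by rewrite /A1 AmulE fgm1g. Qed.

Lemma DA1g (t : A -> A -> AA) (mm : AA -> AA -> AA) (m : A -> A -> A)
  (D : AA -> AA) (one : A)
  (L1 : forall a b c : A, D (t (m a b) c) =
     mm (D (t a c)) (t b one) + mm (t one a) (D (t b c)))
  (h11 : m one one = one) (hl : forall X, mm (t one one) X = X)
  (hr : forall X, mm X (t one one) = X) w : D (t one w) = 0.
Proof.
have := L1 one one w; rewrite h11 hl hr => h.
by apply: (addrI (D (t one w))); rewrite addr0 -h.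
Qed.

Lemma DInvg (t : A -> A -> AA) (mm : AA -> AA -> AA) (m : A -> A -> A)
  (D : AA -> AA) (one : A)
  (L1 : forall a b c : A, D (t (m a b) c) =
     mm (D (t a c)) (t b one) + mm (t one a) (D (t b c)))
  (hr : forall X, mm X (t one one) = X)
  (mmNl : forall a b, mm (- a) b = - mm a b)
  (mmA : forall x y z, mm (mm x y) z = mm x (mm y z)) (a b : A)
  (hba : m b a = one) (hab : mm (t a one) (t b one) = t one one)
  (h0 : forall w, D (t one w) = 0) w :
  D (t b w) = - mm (mm (t one b) (D (t a w))) (t b one).
Proof.
have := L1 b a w; rewrite hba h0 => h.
have := congr1 (fun z => z - mm (t one b) (D (t a w))) h.
rewrite /= add0r addrK => hX.
by rewrite -[LHS]hr -hab -mmA -hX mmNl.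
Qed.

Lemma Dcomp (m : A -> A -> A) (t : A -> A -> AA) (mm : AA -> AA -> AA)
 (muf : AA -> A) (D : AA -> AA) (e : FG -> A) (e2 : FG * FG -> AA)
 (hE : forall g h, m (e g) (e h) = e (fgm g h))
 (hT : forall g h, t (e g) (e h) = e2 (g, h))
 (hAA : forall p q, mm (e2 p) (e2 q) = e2 (fgmul2 p q))
 (hmu : forall p, muf (e2 p) = e (fgm p.1 p.2))
 (mmNl : forall a b, mm (- a) b = - mm a b) (mmNr : forall a b, mm a (- b) = - mm a b)
 (mm0l : forall b, mm 0 b = 0) (mm0r : forall a, mm a 0 = 0)
 (mmDl : forall a a' b, mm (a + a') b = mm a b + mm a' b)
 (mmDr : forall a b b', mm a (b + b') = mm a b + mm a b')
 (muD : forall x y, muf (x + y) = muf x + muf y) (muN : forall x, muf (- x) = - muf x)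
 (mu0 : muf 0 = 0)
 (Huv : D (t (e fg_u) (e fg_v)) = - t (m (e fg_v) (e fg_u)) (e fg1))
 (Hvu : D (t (e fg_v) (e fg_u)) = t (m (e fg_u) (e fg_v)) (e fg1))
 (Huu : D (t (e fg_u) (e fg_u)) = 0) (Hvv : D (t (e fg_v) (e fg_v)) = 0)
 (L1 : forall a b c : A, D (t (m a b) c) =
     mm (D (t a c)) (t b (e fg1)) + mm (t (e fg1) a) (D (t b c)))
 (DUi : forall w, D (t (e fg_ui) w) =
    - mm (mm (t (e fg1) (e fg_ui)) (D (t (e fg_u) w))) (t (e fg_ui) (e fg1)))
 (DVi : forall w, D (t (e fg_vi) w) =
    - mm (mm (t (e fg1) (e fg_vi)) (D (t (e fg_v) w))) (t (e fg_vi) (e fg1))) :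
 let c := m (m (m (e fg_u) (e fg_v)) (e fg_ui)) (e fg_vi) in
 muf (D (t c (e fg_u))) = m c (e fg_u) - m (e fg_u) c /\
 muf (D (t c (e fg_v))) = m c (e fg_v) - m (e fg_v) c.
Proof.
move=> c; split; rewrite /c !L1 !DUi !DVi ?Huu ?Hvu ?Huv ?Hvv;
rewrite !hE !hT;
rewrite !(mmNl, mmNr, mm0l, mm0r, mmDl, mmDr, hAA);
rewrite !(muD, muN, mu0, hmu) /=;
rewrite ?hE ?hT ?hAA ?hmu /=.
  by rewrite add0r !subr0; congr (e _ - e _); fgeq.
by rewrite addr0 subr0 opprK addrC; congr (e _ - e _); fgeq.
Qed.

Lemma Amul1l X : Amul A1 X = X.
Proof.
move: X; apply: malg_ext => [k x y|k x y|g] /=; first by rewrite AmulZDr.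
  by [].
by rewrite /A1 AmulE fgm1g.
Qed.

Lemma Amul1r X : Amul X A1 = X.
Proof.
move: X; apply: malg_ext => [k x y|k x y|g] /=; first by rewrite AmulZDl.
  by [].
by rewrite /A1 AmulE fgmg1.
Qed.

Lemma muAAr X b : mu (AAmul X (tens A1 b)) = Amul (mu X) b.
Proof.
move: X; apply: malg_ext => [k x y|k x y|[g h]] /=.
- by rewrite AAmulZDl muZD.
- by rewrite muZD AmulZDl.
move: b; apply: malg_ext => [k x y|k x y|i] /=.
- by rewrite tensZDr AAmulZDr muZD.
- by rewrite AmulZDr.
rewrite /A1 tensE AAmulE !muE AmulE /=.
by rewrite fgmg1 fgmA.
Qed.

Lemma muAAl X a : mu (AAmul (tens a A1) X) = Amul a (mu X).
Proof.
move: X; apply: malg_ext => [k x y|k x y|[g h]] /=.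
- by rewrite AAmulZDr muZD.
- by rewrite muZD AmulZDr.
move: a; apply: malg_ext => [k x y|k x y|i] /=.
- by rewrite tensZDl AAmulZDl muZD.
- by rewrite AmulZDl.
rewrite /A1 tensE AAmulE !muE AmulE /=.
by rewrite fgm1g fgmA.
Qed.

Lemma brc_mulg (t : A -> A -> AA) (mm : AA -> AA -> AA) (m : A -> A -> A)
  (muf : AA -> A) (D : AA -> AA) (one c : A)
  (L2 : forall a b c : A, D (t a (m b c)) =
     mm (D (t a b)) (t one c) + mm (t b one) (D (t a c)))
  (muD : forall x y, muf (x + y) = muf x + muf y)
  (muAAr : forall X b, muf (mm X (t one b)) = m (muf X) b)
  (muAAl : forall X a, muf (mm (t a one) X) = m a (muf X)) a b :
  muf (D (t c (m a b))) = m (muf (D (t c a))) b + m a (muf (D (t c b))).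
Proof. by rewrite L2 muD muAAr muAAl. Qed.

Lemma zid (V : zmodType) (x1 x2 y1 y2 y3 : V) :
  x1 + x2 - (y1 - y2) = x1 - (y1 - y3) + (x2 - (y3 - y2)).
Proof.
rewrite !opprB [RHS]addrACA; congr (_ + _).
by rewrite addrC addrA subrK.
Qed.

Lemma dlt_mulg (m : A -> A -> A) (br : A -> A) (c : A)
  (hbr : forall a b, br (m a b) = m (br a) b + m a (br b))
  (mDl : forall a a' b, m (a + a') b = m a b + m a' b)
  (mDr : forall a b b', m a (b + b') = m a b + m a b')
  (mNl : forall a b, m (- a) b = - m a b) (mNr : forall a b, m a (- b) = - m a b)
  (mA : forall x y z, m (m x y) z = m x (m y z)) a b :
  br (m a b) - (m c (m a b) - m (m a b) c) =
  m (br a - (m c a - m a c)) b + m a (br b - (m c b - m b c)).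
Proof.
rewrite hbr !(mDl, mDr, mNl, mNr) !mA.
exact: zid.
Qed.

Lemma dlt_invg (m : A -> A -> A) (d : A -> A) (one a ai : A)
  (hd : forall a b, d (m a b) = m (d a) b + m a (d b))
  (m1l : forall X, m one X = X) (m1r : forall X, m X one = X)
  (m0l : forall X, m 0 X = 0) (m0r : forall X, m X 0 = 0)
  (mA : forall x y z, m (m x y) z = m x (m y z))
  (h1 : m ai a = one) (h2 : m a ai = one) (ha : d a = 0) : d ai = 0.
Proof.
have d1 : d one = 0.
  have := hd one one; rewrite (m1l one) (m1r (d one)) (m1l (d one)) => h.
  by apply: (addrI (d one)); rewrite addr0 -h.
have := hd a ai; rewrite h2 d1 ha m0l add0r => h.
by rewrite -[d ai]m1l -h1 mA -h m0r.
Qed.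


Lemma lid (R : nzRingType) (V : lmodType R) (c : R) (p q r s t u : V) :
  (c *: p + q) - ((c *: r + s) - (c *: t + u)) = c *: (p - (r - t)) + (q - (s - u)).
Proof.
rewrite !scalerBr !opprB [RHS]addrACA; congr (_ + _).
by rewrite opprD addrACA.
Qed.

Definition brc (D : {linear AA -> AA}) (H : A) : A := mu (D (tens cA H)).
Definition dlt (D : {linear AA -> AA}) (H : A) : A :=
  brc D H - (Amul cA H - Amul H cA).

Lemma dlt_mul (D : {linear AA -> AA}) : is_double_bracket_K D ->
  forall a b, dlt D (Amul a b) = Amul (dlt D a) b + Amul a (dlt D b).
Proof.
move=> HD; have HD' := HD; case: HD' => _ _ _ L2 _.
have hbr : forall a b, brc D (Amul a b) = Amul (brc D a) b + Amul a (brc D b).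
  move=> a b; exact: (@brc_mulg tens AAmul Amul mu D A1 cA L2 muD muAAr muAAl a b).
move=> a b; exact: (@dlt_mulg Amul (brc D) cA hbr AmulDl AmulDr AmulNl AmulNr AmulA a b).
Qed.

Lemma dlt_uv (D : {linear AA -> AA}) : is_double_bracket_K D ->
  dlt D Au = 0 /\ dlt D Av = 0.
Proof.
move=> HD; have HD' := HD; case: HD' => Huv Hvu [Huu Hvv] L2 L1.
have h0 := @DA1g tens AAmul Amul D A1 L1 A1A1 AAunitl AAunitr.
have hba : Amul Aui Au = A1.
  rewrite /Aui /Au /A1 AmulE; congr << _ >>; fgeq.
have hab : AAmul (tens Au A1) (tens Aui A1) = tens A1 A1.
  rewrite /Au /Aui /A1 !tensE AAmulE; congr << _ >>; rewrite /fgmul2 /=; congr pair; fgeq.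
have hbav : Amul Avi Av = A1.
  rewrite /Avi /Av /A1 AmulE; congr << _ >>; fgeq.
have habv : AAmul (tens Av A1) (tens Avi A1) = tens A1 A1.
  rewrite /Av /Avi /A1 !tensE AAmulE; congr << _ >>; rewrite /fgmul2 /=; congr pair; fgeq.
have hUi := @DInvg tens AAmul Amul D A1 L1 AAunitr AAmulNl AAmulA Au Aui hba hab h0.
have hVi := @DInvg tens AAmul Amul D A1 L1 AAunitr AAmulNl AAmulA Av Avi hbav habv h0.
have /= [Du Dv] := @Dcomp Amul tens AAmul mu D (fun g => << g >>) (fun p => << p >>)
  AmulE tensE AAmulE muE AAmulNl AAmulNr AAmul0l AAmul0r AAmulDl AAmulDr
  muD muN mu0 Huv Hvu Huu Hvv L1 hUi hVi.
by split; apply/eqP; rewrite subr_eq0; apply/eqP; [exact: Du | exact: Dv].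
Qed.

Lemma dlt_e (D : {linear AA -> AA}) : is_double_bracket_K D ->
  forall g : FG, dlt D << g >> = 0.
Proof.
move=> HD; have [du dv] := dlt_uv HD.
have hm := dlt_mul HD.
have h1u : Amul Aui Au = A1 by rewrite /Aui /Au /A1 AmulE; congr << _ >>; fgeq.
have h2u : Amul Au Aui = A1 by rewrite /Aui /Au /A1 AmulE; congr << _ >>; fgeq.
have h1v : Amul Avi Av = A1 by rewrite /Avi /Av /A1 AmulE; congr << _ >>; fgeq.
have h2v : Amul Av Avi = A1 by rewrite /Avi /Av /A1 AmulE; congr << _ >>; fgeq.
have dui := @dlt_invg Amul (dlt D) A1 Au Aui hm Amul1l Amul1r Amul0l Amul0r AmulA h1u h2u du.
have dvi := @dlt_invg Amul (dlt D) A1 Av Avi hm Amul1l Amul1r Amul0l Amul0r AmulA h1v h2v dv.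
have d1 : dlt D A1 = 0.
  by rewrite -h2u hm du dui Amul0l Amul0r addr0.
case=> s; elim: s => [|x s IH] Hs.
  have -> : << @FGword [::] Hs >> = A1 by rewrite /A1; congr << _ >>; fgeq.
  exact: d1.
have Hs' : reducedw s := path_sorted Hs.
have -> : << @FGword (x :: s) Hs >> = Amul << fg_letter x >> << @FGword s Hs' >>.
  rewrite AmulE; congr << _ >>; apply: val_inj => /=.
  rewrite reduce_id //.
  by case: s Hs {IH Hs'} => [|y s] //= /andP [H _]; rewrite (negbTE H).
rewrite hm (IH Hs') Amul0r addr0.
have -> : dlt D << fg_letter x >> = 0; last by rewrite Amul0l.
by clear Hs IH; case: x => [[] []]; [exact: dvi | exact: dv | exact: dui | exact: du].
Qed.

Lemma dlt_lin (D : {linear AA -> AA}) : lin (dlt D).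
Proof.
move=> c x y; rewrite /dlt /brc; move: cA => cc.
rewrite tensZDr linearP muZD AmulZDr AmulZDl.
exact: lid.
Qed.

Theorem mainTheorem6 (D : {linear AA -> AA}) :
  is_double_bracket_K D ->
  forall H : A, in_commA (bracketK D cA H).
Proof.
move=> HD H.
have h0 : dlt D H = 0.
  have := @malg_ext FG A (dlt D) (fun _ => 0) (@dlt_lin D).
  apply => [c x y|g]; first by rewrite scaler0 addr0.
  exact: dlt_e.
exists [:: (1, (cA, H))]; rewrite big_cons big_nil addr0 scale1r /=.
by apply/eqP; rewrite -subr_eq0; apply/eqP; exact: h0.
Qed.
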